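(* Let $T:\mathcal{H}\to Y$ be a linear operator from an infinite dimensional (real or complex) Hilbert space $\mathcal{H}$ to a Banach space $Y$. The following are equivalent: (i) $T$ is limited; (ii) $T$ maps every orthonormal subset of $\mathcal{H}$ onto a limited set; (iii) $T$ maps every orthonormal basis of $\mathcal{H}$ onto a limited set; (iv) $T$ maps every orthonormal sequence of $\mathcal{H}$ onto a limited set.
   Context: For a normed space $X$, $X'$ denotes its dual and $B_X$ its closed unit ball. A subset $A$ of a normed space $X$ is called limited if every weak$^*$-null sequence $(f_n)$ in $X'$ converges to zero uniformly on $A$, i.e. $\sup_{a\in A}|f_n(a)|\to 0$. A linear operator $T:X\to Y$ is limited if $T(B_X)$ is a limited subset of $Y$. *)

(* Defs.v *)
From HB Require Import structures.
From mathcomp Require Import all_boot all_order all_algebra.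
From mathcomp Require Import all_classical all_reals all_analysis.
From mathcomp Require Import complex.
Import numFieldNormedType.Exports.

Set Implicit Arguments.
Unset Strict Implicit.
Unset Printing Implicit Defensive.

Import Order.TTheory GRing.Theory Num.Theory.
Local Open Scope ring_scope.
Local Open Scope classical_set_scope.

(* Scalars K : numFieldType (instantiated in the statement with K = R, conj = id,
   and with K = R[i] = complex R, conj = complex conjugation). *)

Section Defs.
Variable K : numFieldType.

(* ip is an inner product on the normed space H which induces the norm of H:
   linear in the first argument, conjugate symmetric w.r.t. conj, and
   `|x|^2 = <x, x>` (which gives positive definiteness). *)
Definition is_inner_product (conj : K -> K) (H : normedModType K)
    (ip : H -> H -> K) : Prop :=
  [/\ forall (a : K) (x y z : H), ip (a *: x + y) z = a * ip x z + ip y z,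
      forall x y : H, ip y x = conj (ip x y)
    & forall x : H, `|x| ^+ 2 = ip x x].

Definition infinite_dimensional (H : lmodType K) : Prop :=
  ~ (exists s : seq H, forall x : H,
        exists c : nat -> K, x = \sum_(i < size s) c i *: s`_i).

Definition dual_elt (Y : normedModType K) (f : Y -> K^o) : Prop :=
  (forall (a : K) (u v : Y), f (a *: u + v) = a * f u + f v) /\ continuous f.

Definition weak_star_null (Y : normedModType K) (f : nat -> Y -> K^o) : Prop :=
  (forall n, dual_elt (f n)) /\ (forall y : Y, (fun n => f n y) @ \oo --> (0 : K^o)).

Definition limited_set (Y : normedModType K) (A : set Y) : Prop :=
  forall f : nat -> Y -> K^o, weak_star_null f ->
    forall eps : K, 0 < eps ->
      \forall n \near \oo, forall a, A a -> `|f n a| <= eps.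

Definition closed_unit_ball {X : normedModType K} : set X :=
  [set x | `|x| <= 1].

Definition limited_op (X Y : normedModType K) (T : X -> Y) : Prop :=
  limited_set (T @` closed_unit_ball (X:=X)).

Definition orthonormal (H : normedModType K) (ip : H -> H -> K) (S : set H) : Prop :=
  forall x y, S x -> S y -> ip x y = (if `[< x = y >] then 1 else 0).

Definition orthonormal_basis (H : normedModType K) (ip : H -> H -> K) (S : set H) : Prop :=
  orthonormal ip S /\
  (forall S' : set H, orthonormal ip S' -> S `<=` S' -> S' = S).

Definition orthonormal_seq (H : normedModType K) (ip : H -> H -> K) (e : nat -> H) : Prop :=
  forall n m, ip (e n) (e m) = (n == m)%:R.

Definition maps_orthonormal_sets_limited (H Y : normedModType K) (ip : H -> H -> K)
    (T : H -> Y) : Prop :=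
  forall S : set H, orthonormal ip S -> limited_set (T @` S).

Definition maps_orthonormal_bases_limited (H Y : normedModType K) (ip : H -> H -> K)
    (T : H -> Y) : Prop :=
  forall S : set H, orthonormal_basis ip S -> limited_set (T @` S).

Definition maps_orthonormal_seqs_limited (H Y : normedModType K) (ip : H -> H -> K)
    (T : H -> Y) : Prop :=
  forall e : nat -> H, orthonormal_seq ip e -> limited_set (T @` range e).

End Defs.

(* Main.v *)
Require Import Defs.
From HB Require Import structures.
From mathcomp Require Import all_boot all_order all_algebra.
From mathcomp Require Import all_classical all_reals all_analysis.
From mathcomp Require Import complex.
Import numFieldNormedType.Exports.
Import Order.TTheory GRing.Theory Num.Theory.
Local Open Scope ring_scope.
Local Open Scope classical_set_scope.

Fixpoint Lseq (A : Type) (g : seq A * nat -> nat * A) (k : nat) : seq A :=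
  if k is k'.+1 then rcons (@Lseq A g k') (g (@Lseq A g k', k')).2 else [::].
Arguments Lseq {A}.
Definition eseq (A : Type) (g : seq A * nat -> nat * A) k := (g (Lseq g k, k)).2.
Arguments eseq {A}.
Lemma Lseq_map (A : Type) (g : seq A * nat -> nat * A) k :
  Lseq g k = [seq eseq g i | i <- iota 0 k].
Proof.
elim: k => [//|k IH]; rewrite [LHS]/= -/(eseq g k) IH.
by rewrite -addn1 iotaD map_cat cats1 /= add0n.
Qed.
Lemma Lseq_size (A : Type) (g : seq A * nat -> nat * A) k : size (Lseq g k) = k.
Proof. by rewrite Lseq_map size_map size_iota. Qed.
Lemma Lseq_nth (A : Type) (x0 : A) (g : seq A * nat -> nat * A) k i :
  (i < k)%N -> nth x0 (Lseq g k) i = eseq g i.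
Proof. by move=> ik; rewrite Lseq_map (nth_map 0%N) ?size_iota // nth_iota // add0n. Qed.

Section Gen.
Variable K : numFieldType.
Variable conj : K -> K.
Hypothesis conjN : forall z : K, z * conj z = `|z| ^+ 2.
Variables (H Y : normedModType K) (ip : H -> H -> K) (T : {linear H -> Y}).
Hypothesis hip : is_inner_product conj ip.

Lemma ip_lin a x y z : ip (a *: x + y) z = a * ip x z + ip y z.
Proof. by case: hip. Qed.
Lemma ip_sym x y : ip y x = conj (ip x y).
Proof. by case: hip. Qed.
Lemma ip_norm x : `|x| ^+ 2 = ip x x.
Proof. by case: hip. Qed.

Lemma ip0l z : ip 0 z = 0.
Proof.
have := ip_lin 1 0 0 z; rewrite scaler0 addr0 mul1r => h.
by apply: (@addrI _ (ip 0 z)); rewrite addr0 -h.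
Qed.
Lemma conj0 : conj 0 = 0.
Proof. by have := ip_sym 0 0; rewrite ip0l => h; rewrite -h. Qed.
Lemma ipZl a x z : ip (a *: x) z = a * ip x z.
Proof. by rewrite -[a *: x]addr0 ip_lin ip0l addr0. Qed.
Lemma ipDl x y z : ip (x + y) z = ip x z + ip y z.
Proof. by rewrite -{1}[x]scale1r ip_lin mul1r. Qed.
Lemma ipBl x y z : ip (x - y) z = ip x z - ip y z.
Proof. by rewrite ipDl -scaleN1r ipZl mulN1r. Qed.
Lemma ip_suml n (F : 'I_n -> H) z :
  ip (\sum_(i < n) F i) z = \sum_(i < n) ip (F i) z.
Proof.
apply: (big_ind2 (fun a b => ip a z = b)) => //; first exact: ip0l.
by move=> x1 x2 y1 y2 <- <-; rewrite ipDl.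
Qed.

Section Phi.
Variable g : H -> K.
Hypothesis gL : forall a u v, g (a *: u + v) = a * g u + g v.
Lemma g0 : g 0 = 0.
Proof.
have := gL 1 0 0; rewrite scaler0 addr0 mul1r => h.
by apply: (@addrI _ (g 0)); rewrite addr0 -h.
Qed.
Lemma gZ a x : g (a *: x) = a * g x.
Proof. by rewrite -[a *: x]addr0 gL g0 addr0. Qed.
Lemma gD x y : g (x + y) = g x + g y.
Proof. by rewrite -{1}[x]scale1r gL mul1r. Qed.
Lemma gB x y : g (x - y) = g x - g y.
Proof. by rewrite gD -scaleN1r gZ mulN1r. Qed.
Lemma gsum n (F : 'I_n -> H) : g (\sum_(i < n) F i) = \sum_(i < n) g (F i).
Proof.
apply: (big_ind2 (fun a b => g a = b)) => //; first exact: g0.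
by move=> x1 x2 y1 y2 <- <-; rewrite gD.
Qed.
End Phi.

Lemma step_lemma (f : nat -> Y -> K^o) (d : K) :
  0 < d -> weak_star_null f ->
  (forall N, exists n, (N <= n)%N /\ exists x : H, `|x| <= 1 /\ d < `|f n (T x)|) ->
  forall (s : seq H),
  (forall i j, (i < size s)%N -> (j < size s)%N -> ip s`_i s`_j = (i == j)%:R) ->
  forall k, exists n (e : H), [/\ (k <= n)%N,
     (forall i, (i < size s)%N -> ip s`_i e = 0 /\ ip e s`_i = 0),
     ip e e = 1 & d / 2 < `|f n (T e)|].
Proof.
move=> d0 [fd fc] nl s ons k.
have d20 : 0 < d / 2 by rewrite divr_gt0 // ltr0n.
set m := size s in ons *.
have fL n : forall a u v, f n (T (a *: u + v)) = a * f n (T u) + f n (T v).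
  by move=> a u v; rewrite linearP /=; case: (fd n) => ->.
set b := d / 2 / m.+1%:R.
have b0 : 0 < b by rewrite divr_gt0 // ltr0n.
have ev : \forall n \near \oo, forall i : 'I_m, `|f n (T s`_i)| <= b.
  apply: filter_forall => i; exact: (@cvgr0_norm_le _ _ _ _ _ _ (fc (T s`_i)) _ b0).
have [N _ HN] := ev.
have [n [Nn [x [x1 fx]]]] := nl (maxn N k).
exists n.
pose c := fun i : 'I_m => ip x s`_i.
pose Px := \sum_(i < m) c i *: s`_i.
pose y := x - Px.
have ipPx z : ip Px z = \sum_(i < m) c i * ip s`_i z.
  by rewrite /Px ip_suml; apply: eq_bigr => i _; rewrite ipZl.
have ys j : (j < m)%N -> ip y s`_j = 0.
  move=> jm; rewrite /y ipBl ipPx (bigD1 (Ordinal jm)) //= ons // eqxx mulr1.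
  rewrite big1 ?addr0 ?subrr // => i ij; rewrite ons //.
  by move: ij; rewrite -val_eqE /= => /negbTE ->; rewrite mulr0.
have sy j : (j < m)%N -> ip s`_j y = 0 by move=> jm; rewrite ip_sym ys // conj0.
have Pxy : ip Px y = 0 by rewrite ipPx big1 // => i _; rewrite sy // mulr0.
have yy : ip y y = ip y x.
  have e1 : ip y y = ip x y by rewrite {1}/y ipBl Pxy subr0.
  by rewrite (ip_sym x y) -e1 -(ip_sym y y).
have yx : ip y x = `|x|^+2 - \sum_(i < m) `|c i|^+2.
  rewrite /y ipBl ip_norm ipPx; congr (_ - _); apply: eq_bigr => i _.
  by rewrite -conjN ip_sym.
have ny2 : `|y|^+2 = `|x|^+2 - \sum_(i < m) `|c i|^+2 by rewrite ip_norm yy yx.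
have sum_le : \sum_(i < m) `|c i|^+2 <= `|x|^+2.
  by rewrite -subr_ge0 -ny2 exprn_ge0.
have x21 : `|x|^+2 <= 1 by rewrite expr_le1.
have c1 i : `|c i| <= 1.
  rewrite -(@expr_le1 _ 2) //; apply: le_trans x21; apply: le_trans sum_le.
  by rewrite (bigD1 i) //= lerDl sumr_ge0 // => j _; rewrite exprn_ge0.
have y1 : `|y| <= 1.
  rewrite -(@expr_le1 _ 2) // ny2; apply: le_trans x21.
  by rewrite lerBlDr lerDl sumr_ge0 // => j _; rewrite exprn_ge0.
have phiPx : `|f n (T Px)| <= d / 2.
  have E : f n (T Px) = \sum_(i < m) c i * f n (T s`_i).
    rewrite /Px (@gsum (fun u => f n (T u)) (fL n) m (fun i => c i *: s`_i)).
    by apply: eq_bigr => i _; exact: (gZ (fun u => f n (T u)) (fL n)).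
  rewrite E; apply: le_trans (ler_norm_sum _ _ _) _.
  apply: (@le_trans _ _ (\sum_(i < m) b)).
    apply: ler_sum => i _; rewrite normrM -[b]mul1r; apply: ler_pM => //.
    exact: HN (leq_trans (leq_maxl _ _) Nn) i.
  rewrite sumr_const card_ord.
  apply: (@le_trans _ _ (b *+ m.+1)); first by rewrite mulrSr lerDl ltW.
  by rewrite /b -[d / 2 / m.+1%:R *+ m.+1]mulr_natr divfK // pnatr_eq0.
have phiy : d / 2 < `|f n (T y)|.
  have E2 : f n (T y) = f n (T x) - f n (T Px) := gB (fun u => f n (T u)) (fL n) x Px.
  rewrite E2; apply: lt_le_trans (lerB_dist _ _).
  rewrite ltrBrDl; apply: le_lt_trans fx.
  apply: (@le_trans _ _ (d / 2 + d / 2)); first by rewrite lerD2r.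
  by rewrite -splitr.
have y0 : 0 < `|y|.
  rewrite normr_gt0; apply/eqP => y0; move: phiy; rewrite y0.
  have F0 : f n (T 0) = 0 := g0 (fun u => f n (T u)) (fL n).
  by rewrite F0 normr0 => /(lt_trans d20); rewrite ltxx.
exists (`|y|^-1 *: y); split.
- exact: leq_trans (leq_maxr _ _) Nn.
- move=> i im; split; first by rewrite ip_sym ipZl ys // mulr0 conj0.
  by rewrite ipZl ys // mulr0.
- by rewrite -ip_norm normrZ ger0_norm ?invr_ge0 // mulVf ?expr1n // gt_eqF.
- have E3 : f n (T (`|y|^-1 *: y)) = `|y|^-1 * f n (T y) := gZ (fun u => f n (T u)) (fL n) _ _.
  rewrite E3 normrM ger0_norm ?invr_ge0 //; apply: lt_le_trans phiy _.
  by apply: ler_peMl => //; rewrite invf_ge1.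
Qed.

Lemma limited_sub (A B : set Y) : A `<=` B -> limited_set B -> limited_set A.
Proof.
move=> AB lB f wf eps eps0; apply: filterS (lB f wf eps eps0) => n Hn a Aa.
exact: Hn (AB _ Aa).
Qed.

Theorem main_gen : [<-> limited_op T; maps_orthonormal_sets_limited ip T;
          maps_orthonormal_bases_limited ip T; maps_orthonormal_seqs_limited ip T].
Proof.
tfae.
- move=> HL S oS; apply: limited_sub HL => _ [x Sx <-]; exists x => //.
  have := oS x x Sx Sx; rewrite asboolT // => h.
  by rewrite /closed_unit_ball /= -(@expr_le1 _ 2) // ip_norm h.
- by move=> H2 S [oS _]; exact: H2 S oS.
- move=> H3 e oe.
  have oR : Defs.orthonormal ip (range e).
    move=> _ _ [n _ <-] [m _ <-]; rewrite oe.
    case: (eqVneq n m) => [->|nm]; first by rewrite asboolT.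
    rewrite asboolF //= => enm; have := oe n m; rewrite enm oe eqxx (negbTE nm).
    by move=> /eqP; rewrite /= oner_eq0.
  pose P := fun A : set H => Defs.orthonormal ip (range e `|` A).
  have [A [PA Amax]] : exists A, P A /\ forall B, A `<` B -> ~ P B.
    apply: Zorn_bigcup => F FP Ftot x y [Rx|[X FX Xx]] [Ry|[Y' FY Yy]].
    + exact: oR.
    + exact: (FP _ FY) x y (or_introl Rx) (or_intror Yy).
    + exact: (FP _ FX) x y (or_intror Xx) (or_introl Ry).
    + have [XY|YX] := Ftot _ _ FX FY.
      * exact: (FP _ FY) x y (or_intror (XY _ Xx)) (or_intror Yy).
      * exact: (FP _ FX) x y (or_intror Xx) (or_intror (YX _ Yy)).
  pose S := range e `|` A.
  have bS : Defs.orthonormal_basis ip S.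
    split => // S' oS' SS'.
    case: (pselect (S' `<=` S)) => [S'S|nS'S]; first by apply/seteqP; split.
    exfalso; apply: (Amax S'); last first.
      rewrite /P (_ : range e `|` S' = S') //; apply/seteqP; split.
        by move=> z [Rz|//]; apply: SS'; left.
      by move=> z Sz; right.
    split; first by move=> z Az; apply: SS'; right.
    by move=> S'A; apply: nS'S => z /S'A Az; right.
  apply: limited_sub (H3 S bS) => _ [_ [n _ <-] <-]; exists (e n) => //.
  by left; exists n.
- move=> H4; apply: contrapT => NL.
  have [f [wf [d [d0 Nev]]]] : exists f : nat -> Y -> K^o, weak_star_null f /\ exists d : K, 0 < d /\
      ~ (\forall n \near \oo, forall a, (T @` @closed_unit_ball K H) a -> `|f n a| <= d).
    apply: contrapT => C; apply: NL => f wf d d0; apply: contrapT => Nev; apply: C.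
    by exists f; split => //; exists d; split.
  have nl : forall N, exists n, (N <= n)%N /\ exists x : H, `|x| <= 1 /\ d < `|f n (T x)|.
    move=> N; apply: contrapT => C; apply: Nev; exists N => // n /= Nn a [x x1 <-].
    rewrite real_leNgt ?normr_real ?gtr0_real //; apply/negP => lt; apply: C.
    by exists n; split => //; exists x; split.
  have d20 : 0 < d / 2 by rewrite divr_gt0 // ltr0n.
  pose ON (s : seq H) := forall i j, (i < size s)%N -> (j < size s)%N -> ip s`_i s`_j = (i == j)%:R.
  have gex : forall sk : seq H * nat, exists p : nat * H, ON sk.1 ->
      [/\ (sk.2 <= p.1)%N,
          (forall i, (i < size sk.1)%N -> ip sk.1`_i p.2 = 0 /\ ip p.2 sk.1`_i = 0),
          ip p.2 p.2 = 1 & d / 2 < `|f p.1 (T p.2)|].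
    move=> [s k]; case: (pselect (ON s)) => [os|nos]; last by exists (0%N, 0) => /nos.
    have [n [e' He]] := step_lemma f d d0 wf nl s os k; by exists (n, e').
  have [g gP] := choice gex.
  pose L := Lseq g. pose e := eseq g.
  have sizeL k : size (L k) = k by exact: Lseq_size.
  have nthL k i : (i < k)%N -> (L k)`_i = e i by exact: Lseq_nth.
  have orth k : forall i j, (i < k)%N -> (j < k)%N -> ip (e i) (e j) = (i == j)%:R.
    elim: k => [//|k IH] i j.
    have ONk : ON (L k) by move=> i' j'; rewrite sizeL => ik jk; rewrite !nthL // IH.
    have [_ Hk ek _] := gP (L k, k) ONk.
    rewrite !ltnS => ik jk.
    move: ik; rewrite leq_eqVlt => /orP[/eqP ->|ik];
      move: jk; rewrite leq_eqVlt => /orP[/eqP ->|jk].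
    + by rewrite eqxx; exact: ek.
    + have := Hk j; rewrite sizeL nthL // => /(_ jk) [_ h].
      by rewrite gtn_eqF //; exact: h.
    + have := Hk i; rewrite sizeL nthL // => /(_ ik) [h _].
      by rewrite ltn_eqF //; exact: h.
    + exact: IH.
  have oe : orthonormal_seq ip e.
    by move=> a b; apply: (orth (maxn a b).+1); rewrite ltnS ?leq_maxl ?leq_maxr.
  have [N _ HN] := H4 e oe f wf (d / 2) d20.
  have ONN : ON (L N) by move=> i j; rewrite sizeL => iN jN; rewrite !nthL // (orth N).
  have [Nn _ _ fN] := gP (L N, N) ONN.
  have : `|f (g (L N, N)).1 (T (e N))| <= d / 2.
    by apply: HN => //; exists (e N) => //; exists N.
  by move=> /(lt_le_trans fN); rewrite ltxx.
Qed.

End Gen.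

Theorem theorem8 :
  (* real Hilbert spaces *)
  (forall (R : realType) (H : completeNormedModType R) (ip : H -> H -> R)
          (Y : completeNormedModType R) (T : {linear H -> Y}),
     is_inner_product id ip -> infinite_dimensional H -> continuous T ->
     [<-> limited_op T;
          maps_orthonormal_sets_limited ip T;
          maps_orthonormal_bases_limited ip T;
          maps_orthonormal_seqs_limited ip T]) /\
  (* complex Hilbert spaces *)
  (forall (R : realType) (H : completeNormedModType R[i]) (ip : H -> H -> R[i])
          (Y : completeNormedModType R[i]) (T : {linear H -> Y}),
     is_inner_product (fun z => z^*) ip -> infinite_dimensional H -> continuous T ->
     [<-> limited_op T;
          maps_orthonormal_sets_limited ip T;
          maps_orthonormal_bases_limited ip T;
          maps_orthonormal_seqs_limited ip T]).
Proof.
split.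
- move=> R H ip Y T hip _ _.
  apply: (main_gen _ _ _ _ _ _ _ hip) => z /=.
  by rewrite real_normK ?num_real // expr2.
- move=> R H ip Y T hip _ _.
  apply: (main_gen _ _ _ _ _ _ _ hip) => z /=.
  by rewrite normCK.
Qed.
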